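(* Fix $n\ge-1$. For every $m\ge1$ and every $m$-generator $x=\langle i_0,\dots,i_m\rangle$ of $\mathcal O_n$ (with $0\le i_0<\cdots<i_m\le n$), writing $x\delta^j_m=\langle i_0,\dots,\widehat{i_j},\dots,i_m\rangle$ for the $(m-1)$-generator obtained by deleting $i_j$, we have in $\lambda(\mathcal O_n)_{m-1}$: $$[s(x)]=\sum_{\substack{0\le j\le m\\ j\text{ odd}}}[x\delta^j_m],\qquad [t(x)]=\sum_{\substack{0\le j\le m\\ j\text{ even}}}[x\delta^j_m].$$
   Context: All $\omega$-categories are strict and globular; for an $m$-cell $x$, $s(x),t(x)$ are its source and target, $s_i,t_i$ iterated ones. An expansion on an $\omega$-category $C$ consists of a $0$-cell $o$ and, for each $k$-cell $x$, a $(k+1)$-cell $\xi_x$ with $\xi_x:o\to x$ if $k=0$ and $\xi_x:\xi_{t(x)}\to x\star_0\xi_{s_0(x)}\star_1\cdots\star_{k-1}\xi_{s_{k-1}(x)}$ if $k>0$ ($\star_p$ the $p$-composition, lower-dimensional cells standing for iterated identities, composites bracketed giving priority to the lowest-dimensional composition), satisfying $\xi_{y\star_p x}=t_{p+1}(y)\star_0\xi_{s_0(x)}\star_1\cdots\star_{p-1}\xi_{s_{p-1}(x)}\star_p\xi_x\star_{p+1}\xi_y$, $\xi_{1_u}=1_{\xi_u}$, $\xi_{\xi_u}=1_{\xi_u}$, $\xi_o=1_o$. $T=UF$ is the monad on $\omega\mathbf{Cat}$ induced by the forgetful functor $U$ from $\omega$-categories with expansion (morphisms preserving $o$ and $\xi$)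 and its left adjoint $F$, with unit $\eta$. $\mathcal O_k=T^{k+1}(\emptyset)$ for $k\ge-1$ ($\mathcal O_{-1}=\emptyset$); $o_k$ and $\xi$ are the origin and expansion of $\mathcal O_k$ ($k\ge0$); $\eta^i:\mathcal O_k\to\mathcal O_{k+i}$ is the composite of units. For $0\le i_0\le\cdots\le i_m\le n$ the cell $\langle i_0,\dots,i_m\rangle$ of $\mathcal O_n$ is defined inductively by $\langle i\rangle=\eta^i(o_{n-i})$ and $\langle i_0,\dots,i_m\rangle=\eta^{i_0}(\xi_{\langle i_1-i_0,\dots,i_m-i_0\rangle})$ (inner cell in $\mathcal O_{n-i_0}$, $\xi$ the expansion of $\mathcal O_{n-i_0}$); the cells with $i_0<\cdots<i_m$ are exactly the $m$-generators of the polygraph freely generating $\mathcal O_n$, so they correspond to injective order-preserving maps $[m]\to[n]$, and $x\delta^j_m$ corresponds to precomposition with the coface $\delta^j_m:[m-1]\to[m]$ missing $j$. For an $\omega$-category $C$, $\lambda(C)_k$ is the free abelian group on $k$-cells of $C$ modulo the subgroup generated by $x\star_j y-x-y$ ($0\le j<k$, composite defined); $[x]$ denotes the class of $x$ (identity cells have class $0$). *)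

(* Defs.v *)
(* Strict globular omega-categories in Street's single-sorted
   presentation: a k-cell is a cell x with src k x = x (lower-dimensional cells
   are thus their own iterated identities). *)
From HB Require Import structures.
From mathcomp Require Import all_boot all_order all_algebra.
Set Implicit Arguments. Unset Strict Implicit. Unset Printing Implicit Defensive.
Import GRing.Theory Num.Theory.

(* Raw data: cells, iterated sources/targets s_p, t_p, and the p-composition.
   comp p y x stands for y *_p x, meaningful when src p y = tgt p x. *)
Record omegaCat := OmegaCat {
  cell :> eqType;
  src : nat -> cell -> cell;
  tgt : nat -> cell -> cell;
  comp : nat -> cell -> cell -> cell
}.

Arguments src {o}. Arguments tgt {o}. Arguments comp {o}.

Definition is_omegaCat (C : omegaCat) : Prop :=
  (forall p q (x : C), (p < q)%N ->
     [/\ src p (src q x) = src p x, src p (tgt q x) = src p x,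
         tgt p (src q x) = tgt p x & tgt p (tgt q x) = tgt p x]) /\
  (forall p q (x : C), (q <= p)%N ->
     [/\ src p (src q x) = src q x, src p (tgt q x) = tgt q x,
         tgt p (src q x) = src q x & tgt p (tgt q x) = tgt q x]) /\
  (forall x : C, exists n, src n x = x) /\
  (forall p (y x : C), src p y = tgt p x ->
     src p (comp p y x) = src p x /\ tgt p (comp p y x) = tgt p y) /\
  (forall p q (y x : C), src p y = tgt p x -> (p < q)%N ->
     src q (comp p y x) = comp p (src q y) (src q x) /\
     tgt q (comp p y x) = comp p (tgt q y) (tgt q x)) /\
  (forall p q (y x : C), src p y = tgt p x -> (q < p)%N ->
     src q (comp p y x) = src q y /\ tgt q (comp p y x) = tgt q y) /\
  (forall p (x : C), comp p (tgt p x) x = x /\ comp p x (src p x) = x) /\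
  (forall p (z y x : C), src p z = tgt p y -> src p y = tgt p x ->
     comp p (comp p z y) x = comp p z (comp p y x)) /\
  (forall p q (y' y x' x : C), (p < q)%N ->
     src q y' = tgt q y -> src q x' = tgt q x -> src p y' = tgt p x' ->
     comp p (comp q y' y) (comp q x' x) = comp q (comp p y' x') (comp p y x)).

Definition is_functor (C D : omegaCat) (f : C -> D) : Prop :=
  (forall p x, f (src p x) = src p (f x)) /\
  (forall p x, f (tgt p x) = tgt p (f x)) /\
  (forall p y x, src p y = tgt p x -> f (comp p y x) = comp p (f y) (f x)).

Section Expansion.
Variables (C : omegaCat) (o : C) (xi : C -> C).

Fixpoint chain (j : nat) (z x : C) : C :=
  match j with
  | 0 => z
  | j'.+1 => comp j' (chain j' z x) (xi (src j' x))
  end.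

Definition xisrc (k : nat) (x : C) : C :=
  match k with 0 => o | k'.+1 => xi (tgt k' x) end.

Definition is_expansion : Prop :=
  src 0 o = o /\
  (forall k (x : C), src k x = x ->
     [/\ src k.+1 (xi x) = xi x, src k (xi x) = xisrc k x
       & tgt k (xi x) = chain k x x]) /\
  (forall p (y x : C), src p y = tgt p x ->
     xi (comp p y x) = comp p.+1 (comp p (chain p (tgt p.+1 y) x) (xi x)) (xi y)) /\
  (* xi_{1_u} = 1_{xi_u} is automatic in the single-sorted presentation *)
  (forall u : C, xi (xi u) = xi u) /\
  xi o = o.
End Expansion.

Definition is_exp_morph (D E : omegaCat) (oD : D) (xiD : D -> D)
  (oE : E) (xiE : E -> E) (h : D -> E) : Prop :=
  is_functor h /\ h oD = oE /\ (forall x, h (xiD x) = xiE (h x)).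

Definition is_free_exp (C D : omegaCat) (oD : D) (xiD : D -> D) (eta : C -> D) : Prop :=
  is_functor eta /\
  forall (E : omegaCat) (oE : E) (xiE : E -> E),
    is_omegaCat E -> is_expansion oE xiE ->
    forall g : C -> E, is_functor g ->
    exists h : D -> E,
      [/\ is_exp_morph oD xiD oE xiE h, (forall x, h (eta x) = g x)
        & forall h' : D -> E, is_exp_morph oD xiD oE xiE h' ->
            (forall x, h' (eta x) = g x) -> forall y, h' y = h y].

Definition emptyCat : omegaCat :=
  @OmegaCat void (fun _ x => x) (fun _ x => x) (fun _ y _ => y).

Definition fromEmpty (D : omegaCat) (v : emptyCat) : D :=
  match v : void with end.

Section Generators.
Local Unset Implicit Arguments.
Variables (O : nat -> omegaCat) (oo : forall k, O k) (xi : forall k, O k -> O k)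
          (eta : forall k, O k -> O k.+1).

Fixpoint etaTo (n i : nat) {struct n} : O (Nat.sub n i) -> O n :=
  match n, i return O (Nat.sub n i) -> O n with
  | 0, _ => fun x => x
  | n'.+1, 0 => fun x => x
  | n'.+1, i'.+1 => fun x => @eta n' (etaTo n' i' x)
  end.

(* genO n c l = < l_0 - c, ..., l_m - c > in O_n *)
Fixpoint genO (n c : nat) (l : seq nat) {struct l} : O n :=
  match l with
  | [::] => @oo n (* junk: not used *)
  | i0 :: rest =>
      etaTo n (i0 - c)
        (match rest with
         | [::] => @oo (Nat.sub n (i0 - c))
         | _ :: _ => @xi _ (genO (Nat.sub n (i0 - c)) i0 rest)
         end)
  end.

Definition gen (n : nat) (l : seq nat) : O n := genO n 0 l.
End Generators.
Arguments etaTo {O} eta n i.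
Arguments genO {O} oo xi eta n c l.
Arguments gen {O} oo xi eta n l.

Definition face (l : seq nat) (j : nat) : seq nat := take j l ++ drop j.+1 l.

(* lambda(C)_k: classes of formal integer combinations of k-cells, modulo the
   subgroup generated by x *_j y - x - y (j < k).  Formal combinations are
   represented as (finitely supported) functions C -> int. *)
Definition delta (C : omegaCat) (x : C) : C -> int := fun z => Posz (z == x).

Inductive lam_rel (C : omegaCat) (k : nat) : (C -> int) -> Prop :=
| lam_gen j (x y : C) : (j < k)%N -> src k x = x -> src k y = y -> src j x = tgt j y ->
    lam_rel k (fun z => (delta (comp j x y) z - delta x z - delta y z)%R)
| lam_zero : lam_rel k (fun _ => 0%R)
| lam_add f g : lam_rel k f -> lam_rel k g -> lam_rel k (fun z => (f z + g z)%R)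
| lam_opp f : lam_rel k f -> lam_rel k (fun z => (- f z)%R).

Definition lam_eq (C : omegaCat) (k : nat) (a b : C -> int) : Prop :=
  exists g, lam_rel k g /\ forall z, (a z - b z)%R = g z.

(* Main.v *)
Require Import Defs.
From mathcomp Require Import all_boot all_order all_algebra.
From mathcomp Require Import zify.
From Stdlib Require Import FunctionalExtensionality.
Require Import Defs.
Set Implicit Arguments. Unset Strict Implicit. Unset Printing Implicit Defensive.
Import GRing.Theory Num.Theory.

Definition flip (C : omegaCat) (p : bool * C) : bool * C := (~~ p.1, p.2).

Inductive LR (C : omegaCat) (k : nat) : seq (bool * C) -> Prop :=
| LRgen j (x y : C) : (j < k)%N -> src k x = x -> src k y = y -> src j x = tgt j y ->
    LR k [:: (true, comp j x y); (false, x); (false, y)]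
| LRnil : LR k [::]
| LRcat s t : LR k s -> LR k t -> LR k (s ++ t)
| LRneg s : LR k s -> LR k (map (@flip C) s)
| LRperm s t : perm_eq s t -> LR k s -> LR k t
| LRadd a s : LR k s -> LR k [:: (true, a), (false, a) & s]
| LRrem a s : LR k [:: (true, a), (false, a) & s] -> LR k s.

Definition ev (C : omegaCat) (s : seq (bool * C)) : C -> int :=
  fun z => (\sum_(p <- s) (if p.1 then delta p.2 z else - delta p.2 z))%R.

Lemma LR_sound (C : omegaCat) k (s : seq (bool * C)) : LR k s -> lam_rel k (ev s).
Proof.
elim=> {s}.
- move=> j x y hj hx hy hc.
  have -> : ev [:: (true, comp j x y); (false, x); (false, y)] =
     (fun z => (delta (comp j x y) z - delta x z - delta y z)%R).
    by apply: functional_extensionality => z; rewrite /ev !big_cons big_nil /= addr0 addrA.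
  exact: lam_gen.
- have -> : ev [::] = (fun _ : C => 0%R) :> (C -> int).
    by apply: functional_extensionality => z; rewrite /ev big_nil.
  exact: lam_zero.
- move=> s t _ hs _ ht.
  have -> : ev (s ++ t) = (fun z => (ev s z + ev t z)%R).
    by apply: functional_extensionality => z; rewrite /ev big_cat.
  exact: lam_add.
- move=> s _ hs.
  have -> : ev (map (@flip C) s) = (fun z => (- ev s z)%R).
    apply: functional_extensionality => z; rewrite /ev big_map -sumrN.
    by apply: eq_bigr => -[[] a] _ //=; rewrite opprK.
  exact: lam_opp.
- move=> s t hp _ hs.
  suff -> : ev t = ev s by [].
  by apply: functional_extensionality => z; rewrite /ev (perm_big _ hp).
- move=> a s _ hs.
  suff -> : ev [:: (true, a), (false, a) & s] = ev s by [].
  by apply: functional_extensionality => z; rewrite /ev !big_cons /= addrA subrr add0r.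
- move=> a s _ hs.
  suff <- : ev [:: (true, a), (false, a) & s] = ev s by [].
  by apply: functional_extensionality => z; rewrite /ev !big_cons /= addrA subrr add0r.
Qed.

Definition neg (C : omegaCat) (s : seq (bool * C)) := map (@flip C) s.
Definition E (C : omegaCat) k (s t : seq (bool * C)) := LR k (s ++ neg t).

Lemma negK (C : omegaCat) (s : seq (bool * C)) : neg (neg s) = s.
Proof. by rewrite /neg -map_comp map_id_in // => -[b a] _; rewrite /flip /= negbK. Qed.

Lemma neg_cat (C : omegaCat) (s t : seq (bool * C)) : neg (s ++ t) = neg s ++ neg t.
Proof. exact: map_cat. Qed.

Lemma LR_pairrem (C : omegaCat) k (p : bool * C) r : LR k (p :: flip p :: r) -> LR k r.
Proof.
case: p => [[] a] /= h; first exact: LRrem h.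
apply: (@LRrem _ _ a); apply: LRperm h.
by rewrite /flip /= -cat1s -[_ :: r]cat1s perm_catCA.
Qed.

Lemma LR_pairadd (C : omegaCat) k (p : bool * C) r : LR k r -> LR k (p :: flip p :: r).
Proof.
case: p => [[] a] /= h; first exact: LRadd h.
apply: LRperm (LRadd a h).
by rewrite /flip /= -cat1s -[_ :: r]cat1s perm_catCA.
Qed.

Lemma LR_cancel (C : omegaCat) k (t r : seq (bool * C)) : LR k (t ++ neg t ++ r) -> LR k r.
Proof.
elim: t => [|p t IH] //= h; apply: IH; apply: (@LR_pairrem _ _ p).
apply: LRperm h.
by apply/permP => q /=; rewrite !count_cat /= !count_cat; lia.
Qed.

Lemma LR_addpairs (C : omegaCat) k (t r : seq (bool * C)) : LR k r -> LR k (t ++ neg t ++ r).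
Proof.
elim: t => [|p t IH] //= h; have := LR_pairadd p (IH h).
apply: LRperm.
by apply/permP => q /=; rewrite !count_cat /= !count_cat; lia.
Qed.

Lemma E_refl (C : omegaCat) k (s : seq (bool * C)) : E k s s.
Proof. by rewrite /E -[_ ++ _]cats0 -catA; apply: LR_addpairs; exact: LRnil. Qed.

Lemma E_trans (C : omegaCat) k (s t u : seq (bool * C)) : E k s t -> E k t u -> E k s u.
Proof.
move=> h1 h2; have h := LRcat h1 h2.
apply: (@LR_cancel _ _ (neg t)); rewrite negK.
apply: LRperm h.
apply/permP => q; rewrite !count_cat; lia.
Qed.

Lemma E_sym (C : omegaCat) k (s t : seq (bool * C)) : E k s t -> E k t s.
Proof.
move=> h; have := LRneg h; apply: LRperm.
rewrite -/(neg _) neg_cat negK perm_catC //.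
Qed.

Lemma E_cat (C : omegaCat) k (s t s' t' : seq (bool * C)) :
  E k s t -> E k s' t' -> E k (s ++ s') (t ++ t').
Proof.
move=> h1 h2; have := LRcat h1 h2; apply: LRperm.
rewrite /neg map_cat.
apply/permP => q; rewrite !count_cat; lia.
Qed.

Lemma E_perm (C : omegaCat) k (s t t' : seq (bool * C)) :
  perm_eq t t' -> E k s t -> E k s t'.
Proof.
move=> hp h; apply: LRperm h; rewrite perm_cat2l /neg perm_map //.
Qed.


Definition fmap (C D : omegaCat) (f : C -> D) (s : seq (bool * C)) : seq (bool * D) :=
  map (fun p => (p.1, f p.2)) s.

Section Cat.
Variable C : omegaCat.
Hypothesis HC : is_omegaCat C.
Implicit Types x y z : C.

Lemma ss_lt p q x : p < q -> src p (src q x) = src p x.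
Proof. by case: HC => H _ h; case: (H p q x h). Qed.
Lemma st_lt p q x : p < q -> src p (tgt q x) = src p x.
Proof. by case: HC => H _ h; case: (H p q x h). Qed.
Lemma ts_lt p q x : p < q -> tgt p (src q x) = tgt p x.
Proof. by case: HC => H _ h; case: (H p q x h). Qed.
Lemma tt_lt p q x : p < q -> tgt p (tgt q x) = tgt p x.
Proof. by case: HC => H _ h; case: (H p q x h). Qed.
Lemma ss_ge p q x : q <= p -> src p (src q x) = src q x.
Proof. by case: HC => _ [H _] h; case: (H p q x h). Qed.
Lemma st_ge p q x : q <= p -> src p (tgt q x) = tgt q x.
Proof. by case: HC => _ [H _] h; case: (H p q x h). Qed.
Lemma ts_ge p q x : q <= p -> tgt p (src q x) = src q x.
Proof. by case: HC => _ [H _] h; case: (H p q x h). Qed.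
Lemma tt_ge p q x : q <= p -> tgt p (tgt q x) = tgt q x.
Proof. by case: HC => _ [H _] h; case: (H p q x h). Qed.
Lemma comp_s p y x : src p y = tgt p x -> src p (comp p y x) = src p x.
Proof. by case: HC => _ [_ [_ [H _]]] h; case: (H p y x h). Qed.
Lemma comp_t p y x : src p y = tgt p x -> tgt p (comp p y x) = tgt p y.
Proof. by case: HC => _ [_ [_ [H _]]] h; case: (H p y x h). Qed.
Lemma comp_shi p q y x : src p y = tgt p x -> p < q ->
  src q (comp p y x) = comp p (src q y) (src q x).
Proof. by case: HC => _ [_ [_ [_ [H _]]]] h h'; case: (H p q y x h h'). Qed.
Lemma comp_thi p q y x : src p y = tgt p x -> p < q ->
  tgt q (comp p y x) = comp p (tgt q y) (tgt q x).
Proof. by case: HC => _ [_ [_ [_ [H _]]]] h h'; case: (H p q y x h h'). Qed.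
Lemma unit_l p x : comp p (tgt p x) x = x.
Proof. by case: HC => _ [_ [_ [_ [_ [_ [H _]]]]]]; case: (H p x). Qed.

Lemma cell_ge d e x : src d x = x -> d <= e -> src e x = x.
Proof. by move=> h he; rewrite -h ss_ge. Qed.
Lemma cell_tgt d e x : src d x = x -> d <= e -> tgt e x = x.
Proof. by move=> h he; rewrite -h ts_ge. Qed.

Lemma zero_lem k j z : j < k -> src j z = z -> LR k [:: (true, z)].
Proof.
move=> hj hz.
have h := @LRgen C k j z z hj (cell_ge hz (ltnW hj)) (cell_ge hz (ltnW hj))
   (etrans hz (esym (cell_tgt hz (leqnn _)))).
have e : comp j z z = z by rewrite -{1}(cell_tgt hz (leqnn j)) unit_l.
rewrite e in h; have := LRneg (LRrem h); by [].
Qed.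

Section Exp.
Variables (o : C) (xi : C -> C).
Hypothesis HE : is_expansion o xi.

Lemma exp_k k x : src k x = x ->
  [/\ src k.+1 (xi x) = xi x, src k (xi x) = xisrc o xi k x & tgt k (xi x) = chain xi k x x].
Proof. by case: HE => _ [H _]; apply: H. Qed.
Lemma exp_comp p y x : src p y = tgt p x ->
  xi (comp p y x) = comp p.+1 (comp p (chain xi p (tgt p.+1 y) x) (xi x)) (xi y).
Proof. by case: HE => _ [_ [H _]]; apply: H. Qed.
Lemma exp_o : src 0 o = o.
Proof. by case: HE. Qed.

Lemma xi_cell d x : src d x = x -> src d.+1 (xi x) = xi x.
Proof. by move=> h; case: (exp_k h). Qed.

Lemma tt_le q p x : q <= p -> tgt q (tgt p x) = tgt q x.
Proof. by rewrite leq_eqVlt => /orP[/eqP->|h]; [rewrite tt_ge|rewrite tt_lt]. Qed.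

Lemma xi_src d x : src d x = x -> forall q, q <= d -> src q (xi x) = xisrc o xi q (tgt q x).
Proof.
elim: d x => [|d IH] x hx q hq.
  have -> : q = 0 by case: q hq.
  by case: (exp_k hx) => _ -> _; rewrite (cell_tgt hx (leqnn 0)).
case: (ltngtP q d.+1) hq => // [hlt|->] _.
  rewrite -(ss_lt _ hlt); case: (exp_k hx) => _ -> _ /=.
  have hc : src d (tgt d x) = tgt d x by rewrite st_ge.
  by rewrite (IH _ hc q (hlt : q <= d)) tt_le.
by case: (exp_k hx) => _ -> _; rewrite (cell_tgt hx (leqnn _)).
Qed.

Lemma xi_tgt d x : src d x = x -> forall q, q <= d -> tgt q (xi x) = chain xi q (tgt q x) (tgt q x).
Proof.
move=> hx q hq; case: (ltngtP q d) hq => // [hlt|->] _.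
  rewrite -(ts_lt _ (ltnSn q)) (xi_src hx hlt) /= tt_lt //.
  have hc : src q (tgt q x) = tgt q x by rewrite st_ge.
  by case: (exp_k hc).
by case: (exp_k hx) => _ _ ->; rewrite (cell_tgt hx (leqnn _)).
Qed.

Lemma chain_ext q z x x' : (forall r, r < q -> src r x = src r x') ->
  chain xi q z x = chain xi q z x'.
Proof.
elim: q => [|q IH] h //=; rewrite IH ?h // => r hr; apply: h; exact: ltnW.
Qed.

Definition Pc q z x := forall r, r < q -> src r z = src r x.

Lemma chain_src q z x : Pc q z x -> forall e, q <= e -> src e (chain xi q z x) = chain xi q (src e z) x.
Proof.
elim: q => [|q IH] hP e he //=.
have hP' : Pc q z x by move=> r hr; apply: hP; exact: ltnW.
have hc : src q (chain xi q z x) = tgt q (xi (src q x)).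
  rewrite (IH hP' q (leqnn q)).
  rewrite (xi_tgt (ss_ge _ (leqnn q)) (leqnn q)) ts_ge //.
  rewrite (hP q (ltnSn q)); apply: chain_ext => r hr; rewrite ss_lt //.
rewrite comp_shi // (IH hP' e (ltnW he)).
congr comp; apply: (cell_ge (xi_cell (ss_ge _ (leqnn q)))) => //.
Qed.

Lemma chain_comp q z x : Pc q.+1 z x -> src q (chain xi q z x) = tgt q (xi (src q x)).
Proof.
move=> hP.
have hP' : Pc q z x by move=> r hr; apply: hP; exact: ltnW.
rewrite (chain_src hP' (leqnn q)).
rewrite (xi_tgt (ss_ge _ (leqnn q)) (leqnn q)) ts_ge //.
rewrite (hP q (ltnSn q)); apply: chain_ext => r hr; rewrite ss_lt //.
Qed.
Lemma LR_xi k s : LR k s -> LR k.+1 (fmap xi s).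
Proof.
elim=> {s} /=.
- move=> j x y hj hx hy hc.
  rewrite (exp_comp hc).
  set Cc := chain xi j (tgt j.+1 x) y; set A := comp j Cc (xi y).
  have hP : Pc j (tgt j.+1 x) y.
    move=> r hr; rewrite st_lt; last exact: ltnW.
    by rewrite -(ss_lt x hr) hc st_lt.
  have hCc1 : src j.+1 Cc = Cc.
    by rewrite /Cc (chain_src hP (leqnSn j)) st_ge.
  have hCck : src k.+1 Cc = Cc by apply: (cell_ge hCc1); exact: ltnW.
  have hc2 : src j Cc = tgt j (xi y).
    rewrite /Cc (chain_src hP (leqnn j)) st_lt // hc (xi_tgt hy (ltnW hj)).
    by apply: chain_ext => r hr; rewrite st_lt.
  have hAk : src k.+1 A = A.
    by rewrite /A comp_shi // ?hCck ?(xi_cell hy) //; exact: ltnW.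
  have hc1 : src j.+1 A = tgt j.+1 (xi x).
    rewrite /A comp_shi // hCc1 (xi_src hy hj) /= tt_lt //.
    rewrite (xi_tgt hx hj) /= st_lt // hc; congr comp.
    by apply: chain_ext => r hr; rewrite hP.
  have g1 := @LRgen C k.+1 j.+1 A (xi x) hj hAk (xi_cell hx) hc1.
  have g2 := @LRgen C k.+1 j Cc (xi y) (ltnW hj) hCck (xi_cell hy) hc2.
  have g3 := @zero_lem k.+1 j.+1 Cc hj hCc1.
  apply: (@LRrem _ _ A); apply: (@LRrem _ _ Cc).
  apply: LRperm (LRcat g1 (LRcat g2 g3)).
  by apply/permP => q /=; rewrite -/A; lia.
- exact: LRnil.
- by move=> s t _ hs _ ht; rewrite /fmap map_cat; apply: LRcat.
- move=> s _ hs.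
  suff -> : fmap xi (map (@flip _) s) = map (@flip _) (fmap xi s) by apply: LRneg.
  by rewrite /fmap -!map_comp; apply: eq_map => -[].
- by move=> s t hp _ hs; apply: LRperm hs; rewrite perm_map.
- by move=> a s _ hs; apply: LRadd.
- by move=> a s _ hs; apply: LRrem hs.
Qed.

Lemma E_xi k s t : E k s t -> E k.+1 (fmap xi s) (fmap xi t).
Proof.
move=> h; have := LR_xi h; rewrite /E /fmap /neg map_cat -!map_comp.
suff -> : forall u : seq (bool * C),
  [seq (flip (C:=C) \o (fun p : bool * C => (p.1, xi p.2))) i | i <- u] =
  [seq ((fun p : bool * C => (p.1, xi p.2)) \o flip (C:=C)) i | i <- u] by [].
by move=> u; apply: eq_map => -[].
Qed.

Lemma chain_cls k y q : src k y = y -> q < k ->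
  E k [:: (true, chain xi q y y)] [:: (true, y)].
Proof.
move=> hy; elim: q => [|q IH] hq; first exact: E_refl.
have hP : forall q, Pc q y y by [].
have hs : src q (src q y) = src q y by rewrite ss_ge.
have hk : src k (chain xi q y y) = chain xi q y y.
  by rewrite (chain_src (hP q) (ltnW (ltnW hq))) hy.
have g : E k [:: (true, chain xi q.+1 y y)] [:: (true, chain xi q y y); (true, xi (src q y))]
  := @LRgen C k q (chain xi q y y) (xi (src q y)) (ltnW hq)
  hk (cell_ge (xi_cell hs) (ltnW hq)) (chain_comp (hP _)).
apply: (E_trans g).
rewrite -[[:: (true, y)]]cats0 -cat1s.
apply: E_cat; first exact: IH (ltnW hq).
rewrite /E /=; exact: zero_lem hq (xi_cell hs).
Qed.

Lemma chain_top k y : src k.+1 y = y ->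
  E k.+1 [:: (true, chain xi k.+1 y y)] [:: (true, y); (true, xi (src k y))].
Proof.
move=> hy.
have hs : src k (src k y) = src k y by rewrite ss_ge.
have hk : src k.+1 (chain xi k y y) = chain xi k y y.
  by rewrite (chain_src (fun _ _ => erefl) (leqnSn k)) hy.
have g : E k.+1 [:: (true, chain xi k.+1 y y)] [:: (true, chain xi k y y); (true, xi (src k y))]
  := @LRgen C k.+1 k (chain xi k y y) (xi (src k y)) (ltnSn k)
  hk (xi_cell hs) (chain_comp (fun _ _ => erefl)).
apply: (E_trans g); rewrite -cat1s -[[:: (true, y); _]]cat1s.
apply: E_cat; [exact: chain_cls | exact: E_refl].
Qed.

End Exp.
End Cat.

Lemma LR_fun (C D : omegaCat) (f : C -> D) k s : is_functor f -> LR k s -> LR k (fmap f s).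
Proof.
move=> [fs [ft fc]]; elim=> {s} /=.
- move=> j x y hj hx hy hc; rewrite fc //.
  apply: LRgen => //; rewrite -?fs -?ft ?hx ?hy ?hc //.
- exact: LRnil.
- by move=> s t _ hs _ ht; rewrite /fmap map_cat; apply: LRcat.
- move=> s _ hs.
  suff -> : fmap f (map (@flip _) s) = map (@flip _) (fmap f s) by apply: LRneg.
  by rewrite /fmap -!map_comp; apply: eq_map => -[].
- by move=> s t hp _ hs; apply: LRperm hs; rewrite perm_map.
- by move=> a s _ hs; apply: LRadd.
- by move=> a s _ hs; apply: LRrem hs.
Qed.

Lemma E_fun (C D : omegaCat) (f : C -> D) k s t : is_functor f -> E k s t -> E k (fmap f s) (fmap f t).
Proof.
move=> hf h; have := LR_fun hf h; rewrite /E /fmap /neg map_cat -!map_comp.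
suff -> : forall u : seq (bool * C),
  [seq (flip (C:=D) \o (fun p : bool * C => (p.1, f p.2))) i | i <- u] =
  [seq ((fun p : bool * C => (p.1, f p.2)) \o flip (C:=C)) i | i <- u] by [].
by move=> u; apply: eq_map => -[].
Qed.


Section Gen.
Variables (O : nat -> omegaCat) (oo : forall k, O k) (xi : forall k, O k -> O k)
  (eta : forall k, O k -> O k.+1).

Lemma genO_shift N c l : genO oo xi eta N c.+1 (map S l) = genO oo xi eta N c l.
Proof.
elim: l N c => [|a l IH] N c //.
case: l IH => [|b l] IH; first by [].
change (etaTo eta N (a - c) (@xi (N - (a - c))%coq_nat (genO oo xi eta (N - (a - c))%coq_nat a.+1 (map S (b :: l))))
  = etaTo eta N (a - c) (@xi (N - (a - c))%coq_nat (genO oo xi eta (N - (a - c))%coq_nat a (b :: l)))).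
by rewrite IH.
Qed.

Lemma genO_cons2 N a b l : genO oo xi eta N 0 (a :: b :: l) =
  etaTo eta N a (@xi (N - a)%coq_nat (genO oo xi eta (N - a)%coq_nat a (b :: l))).
Proof.
change (etaTo eta N (a - 0) (@xi (N - (a - 0))%coq_nat (genO oo xi eta (N - (a - 0))%coq_nat a (b :: l)))
  = etaTo eta N a (@xi (N - a)%coq_nat (genO oo xi eta (N - a)%coq_nat a (b :: l)))).
by rewrite subn0.
Qed.

Lemma genO_cons1 N a : genO oo xi eta N 0 [:: a] = etaTo eta N a (oo (N - a)%coq_nat).
Proof.
change (etaTo eta N (a - 0) (oo (N - (a - 0))%coq_nat) = etaTo eta N a (oo (N - a)%coq_nat)).
by rewrite subn0.
Qed.

Lemma gen_shift n l : l != [::] -> gen oo xi eta n.+1 (map S l) = @eta n (gen oo xi eta n l).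
Proof.
case: l => [|a l] // _; rewrite /gen.
case: l => [|b l].
  by rewrite genO_cons1 [in RHS]genO_cons1.
rewrite genO_cons2 [in RHS]genO_cons2.
change (@eta n (etaTo eta n a (@xi (n - a)%coq_nat (genO oo xi eta (n - a)%coq_nat a.+1 (map S (b :: l))))) =
  @eta n (etaTo eta n a (@xi (n - a)%coq_nat (genO oo xi eta (n - a)%coq_nat a (b :: l))))).
by rewrite genO_shift.
Qed.

Lemma gen_0cons n r : r != [::] -> gen oo xi eta n (0 :: r) = @xi n (gen oo xi eta n r).
Proof. by case: r => [|b r] // _; case: n. Qed.

Lemma gen_0 n : gen oo xi eta n [:: 0] = oo n.
Proof. by case: n. Qed.
End Gen.

Lemma face_map l j : face (map S l) j = map S (face l j).
Proof. by rewrite /face map_cat map_take map_drop. Qed.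

Lemma face_nonnil l j : 1 < size l -> face l j != [::].
Proof.
move=> h; rewrite -size_eq0 /face size_cat size_take size_drop.
apply/eqP; case: ifP => H; move: h H; set s := size l; lia.
Qed.

Lemma filter_iota (T : Type) (P : pred nat) (g : nat -> T) k :
  map g (filter P (iota 0 k.+1)) =
  (if P 0 then [:: g 0] else [::]) ++ map (g \o S) (filter (P \o S) (iota 0 k)).
Proof.
have -> : iota 0 k.+1 = 0 :: map S (iota 0 k).
  by rewrite /= -(addn0 1) iotaDl.
rewrite /= filter_map; case: (P 0); rewrite /= -map_comp //.
Qed.


Section Main.
Variables (O : nat -> omegaCat) (oo : forall k, O k) (xi : forall k, O k -> O k)
  (eta : forall k, O k -> O k.+1).
Hypothesis HO : forall k, is_omegaCat (O k).
Hypothesis HX : forall k, is_expansion (oo k) (@xi k).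
Hypothesis Heta : forall k, is_functor (@eta k).

Local Notation g n l := (gen oo xi eta n l).
Definition gens n l (P : pred nat) m :=
  map (fun j => (true, g n (face l j))) (filter P (iota 0 m.+1)).

Definition stmt m n l :=
  size l = m.+1 -> sorted ltn l -> all (fun i => i <= n) l ->
  src m (g n l) = g n l /\
  (0 < m -> E m.-1 [:: (true, src m.-1 (g n l))] (gens n l odd m) /\
            E m.-1 [:: (true, tgt m.-1 (g n l))] (gens n l (fun j => ~~ odd j) m)).

Lemma gens_0 n r P m : 1 < size r ->
  gens n (0 :: r) P m.+1 = (if P 0 then [:: (true, g n r)] else [::]) ++
     fmap (@xi n) (gens n r (P \o S) m).
Proof.
move=> hr; rewrite /gens filter_iota; congr (_ ++ _); first by rewrite /face /= drop0.
rewrite /fmap -map_comp; apply: eq_map => j /=.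
change (face (0 :: r) j.+1) with (0 :: face r j).
by rewrite gen_0cons // face_nonnil.
Qed.

Lemma gens_0odd n r m : 1 < size r ->
  gens n (0 :: r) odd m.+1 = fmap (@xi n) (gens n r (fun j => ~~ odd j) m).
Proof. by move=> hr; rewrite gens_0. Qed.

Lemma gens_0even n r m : 1 < size r ->
  gens n (0 :: r) (fun j => ~~ odd j) m.+1 = [:: (true, g n r)] ++ fmap (@xi n) (gens n r odd m).
Proof.
move=> hr; rewrite gens_0 //; congr (_ ++ fmap _ _).
by rewrite /gens; congr map; apply: eq_filter => j /=; rewrite negbK.
Qed.

Lemma gens_shift n l P m : 1 < size l ->
  gens n.+1 (map S l) P m = fmap (@eta n) (gens n l P m).
Proof.
move=> hl; rewrite /gens /fmap -map_comp; apply: eq_map => j /=.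
by rewrite face_map gen_shift // face_nonnil.
Qed.

Lemma core N : forall m n l, m + n = N -> stmt m n l.
Proof.
elim/ltn_ind: N => N IH m n [|i0 r] hN //.
case: i0 => [|i].
-
  case: r => [|i1 r'].
    move=> hs _ _; have m0 : m = 0 by case: hs.
    rewrite m0.
    split=> //; rewrite gen_0; exact: exp_o (HX n).
  set r := i1 :: r'.
  move=> /= [hs] hsort hall.
  have hr : r != [::] by [].
  rewrite gen_0cons //.
  case: m hs hN => [|m'] hs hN; first by [].
  have IHr : stmt m' n r by apply: (IH (m' + n)); lia.
  have {IHr} [hy IHr] := IHr hs (andP hsort).2 hall.
  split; first exact: (xi_cell (HX n) hy).
  move=> _ /=.
  case: m' hs hN IHr hy => [|m''] hs hN IHr hy.
    move: hs; case: r' @r hr hsort hall hy IHr => // r hr hsort hall hy IHr _.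
    case: (exp_k (HX n) hy) => _ /= -> ->.
    by split; rewrite /gens /= ?gen_0; apply: E_refl.
  have hr1 : 1 < size r by rewrite /r /= hs.
  have [IH1 IH2] := IHr (erefl _).
  case: (exp_k (HX n) hy) => _ /= -> ->.
  rewrite gens_0odd // gens_0even //; split.
    exact: (E_xi (HO n) (HX n) IH2).
  apply: E_trans (chain_top (HO n) (HX n) hy) _.
  apply: (@E_cat _ _ [:: (true, g n r)] [:: (true, g n r)]); first exact: E_refl.
  exact: (E_xi (HO n) (HX n) IH1).
- move=> hs hsort hall.
  case: n hN hall => [|n'] hN hall; first by move: hall => /andP[].
  have hpos : all (fun x => 0 < x) (i.+1 :: r).
    rewrite /= (sub_all _ (order_path_min ltn_trans hsort)) //.
    by move=> x /= hx; apply: leq_ltn_trans hx.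
  have [l' hl] : exists l', i.+1 :: r = map S l'.
    exists (map predn (i.+1 :: r)); rewrite -map_comp map_id_in //.
    by move=> x hx /=; rewrite prednK //; apply: (allP hpos).
  rewrite hl in hs hsort hall *.
  rewrite size_map in hs.
  rewrite sorted_map in hsort.
  rewrite all_map in hall.
  have IHl : stmt m n' l' by apply: (IH (m + n')); lia.
  have [hc IHl2] := IHl hs hsort hall.
  have hl0 : l' != [::] by rewrite -size_eq0 hs.
  case: (Heta n') => fs [ft _].
  rewrite gen_shift //; split; first by rewrite -fs hc.
  move=> hm; have [E1 E2] := IHl2 hm.
  have hl1 : 1 < size l' by rewrite hs.
  rewrite !gens_shift //; split.
    by have := E_fun (Heta n') E1; rewrite [fmap _ [:: _]]/= fs.
  by have := E_fun (Heta n') E2; rewrite [fmap _ [:: _]]/= ft.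
Qed.
End Main.

Lemma E_lam (C : omegaCat) k (a : C) (gg : nat -> C) (P : pred nat) m :
  E k [:: (true, a)] (map (fun j => (true, gg j)) (filter P (iota 0 m.+1))) ->
  lam_eq k (delta a) (fun z => (\sum_(j < m.+1 | P j) delta (gg j) z)%R).
Proof.
move=> h; exists (ev ([:: (true, a)] ++ neg (map (fun j => (true, gg j)) (filter P (iota 0 m.+1))))).
split; first exact: LR_sound h.
move=> z; rewrite /ev big_cons /neg big_map big_map big_filter.
have -> : iota 0 m.+1 = index_iota 0 m.+1 by rewrite /index_iota subn0.
by rewrite big_mkord -sumrN.

Qed.

Theorem mainTheorem11
  (O : nat -> omegaCat) (oo : forall k, O k) (xi : forall k, O k -> O k)
  (eta : forall k, O k -> O k.+1) :
  (forall k, is_omegaCat (O k)) ->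
  (forall k, is_expansion (oo k) (xi k)) ->
  is_free_exp (oo 0) (xi 0) (@fromEmpty (O 0)) ->
  (forall k, is_free_exp (oo k.+1) (xi k.+1) (eta k)) ->
  forall (n m : nat) (l : seq nat),
    (1 <= m)%N -> size l = m.+1 -> sorted ltn l -> all (fun i => i <= n)%N l ->
    let x := gen oo xi eta n l in
    lam_eq m.-1 (delta (src m.-1 x))
      (fun z => (\sum_(j < m.+1 | odd j) delta (gen oo xi eta n (face l j)) z)%R)
    /\
    lam_eq m.-1 (delta (tgt m.-1 x))
      (fun z => (\sum_(j < m.+1 | ~~ odd j) delta (gen oo xi eta n (face l j)) z)%R).
Proof.
move=> HO HX _ Hfree n m l hm hs hsort hall x.
have Heta : forall k, is_functor (eta k) by move=> k; case: (Hfree k).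
have [_ /(_ hm) [E1 E2]] := core HO HX Heta (erefl (m + n)) hs hsort hall.
split.
  exact: (E_lam (P := odd) E1).
exact: (E_lam (P := fun j => ~~ odd j) E2).
Qed.
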